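(* Consider the contextual bandit setting below run for $T$ iterations with $N$ arms and $d$-dimensional contexts. Let $E_T$ be the event that the policy population reaches the $\delta$-target within $T$ iterations, with $\Pr(E_T)=1-\epsilon_{\delta,T}$. Suppose there is a contextual bandit algorithm and a constant $C>0$ such that for every $\eta_1\in(0,1)$, with probability at least $1-\eta_1$ its $T$-regret satisfies $R_T\le C\sqrt{Td\,\ln^3\!\big(NT\ln(T)/\eta_1\big)}$, and that this event is independent of $E_T$. Then for every $\eta$ with $\epsilon_{\delta,T}<\eta<1$, with probability at least $1-\eta$ the $\delta$-target is reached within $T$ iterations and $$R_T\le C\sqrt{Td\,\ln^3\!\Big(\frac{NT\ln(T)\,(1-\epsilon_{\delta,T})}{\eta-\epsilon_{\delta,T}}\Big)},$$ i.e. the regret of bandit selection is $O\Big(\sqrt{Td\ln^3\big(\frac{NT\ln(T)(1-\epsilon_{\delta,T})}{\eta-\epsilon_{\delta,T}}\big)}\Big)$ with probability $1-\eta$.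
   Context: Contextual bandit setting: there is a set $\mathcal{A}$ of $N$ arms (here, the $N$ policies of a diversity RL population; selecting an arm means choosing that policy to update). At each iteration $t=1,\dots,T$ one observes feature vectors $x_{t,a}\in\mathbb{R}^d$ with $\|x_{t,a}\|_2\le 1$ for each $a\in\mathcal{A}$, the algorithm chooses an arm $a_t$ and receives reward $r_{t,a_t}\in[0,1]$ (the change in population diversity caused by the update). Linear realizability: there is an unknown $\theta^*\in\mathbb{R}^d$ with $\|\theta^*\|_2\le1$ such that $\mathbb{E}[r_{t,a}\mid x_{t,a}]=x_{t,a}^T\theta^*$ for all $t,a$. The $T$-regret is $R_T=\mathbb{E}[\sum_{t=1}^T r_{t,a_t^*}]-\mathbb{E}[\sum_{t=1}^T r_{t,a_t}]$, where $a_t^*$ is the arm with maximal expected reward at iteration $t$. For a diversity matrix $U$ with $U_{ij}=Div(\pi^i,\pi^j)$ and a population-diversity function $f$, the population reaches the $\delta$-target when $f(U)>\delta$. The number $\epsilon_{\delta,T}$ satisfies $\epsilon_{\delta,T}\to0$ as $T\to\infty$, so $\eta-\epsilon_{\delta,T}\to\eta>0$. *)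

(* Defs.v *)
From HB Require Import structures.
From mathcomp Require Import all_boot all_order all_algebra.
From mathcomp Require Import all_classical all_reals all_analysis.
Set Implicit Arguments. Unset Strict Implicit. Unset Printing Implicit Defensive.
Import Order.TTheory GRing.Theory Num.Theory.
Local Open Scope ring_scope.
Local Open Scope classical_set_scope.

Definition lin_reward (R : realType) (d : nat) (x theta : 'rV[R]_d) : R :=
  (x *m theta^T) 0 0.

Definition l2norm (R : realType) (d : nat) (x : 'rV[R]_d) : R :=
  Num.sqrt (\sum_(i < d) x 0 i ^+ 2).

(* T-regret of the arm selection a (iterations 1..T), with a_star t the arm
   of maximal expected reward at iteration t. *)
Definition bandit_regret (R : realType) (Omega : Type) (N d T : nat)
  (x : nat -> Omega -> 'I_N -> 'rV[R]_d) (theta : 'rV[R]_d)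
  (a a_star : nat -> Omega -> 'I_N) (w : Omega) : R :=
  \sum_(1 <= t < T.+1)
     (lin_reward (x t w (a_star t w)) theta - lin_reward (x t w (a t w)) theta).

Definition reaches_target (R : realType) (Omega : Type) (N T : nat)
  (U : nat -> Omega -> 'M[R]_N) (f : 'M[R]_N -> R) (delta : R) : set Omega :=
  [set w | exists t : nat, (t <= T)%N /\ delta < f (U t w)].

Definition regret_bound (R : realType) (C : R) (N d T : nat) (eta1 : R) : R :=
  C * Num.sqrt (T%:R * d%:R * (ln (N%:R * T%:R * ln T%:R / eta1)) ^+ 3).

(* Main.v *)
Require Import Defs.
From HB Require Import structures.
From mathcomp Require Import all_boot all_order all_algebra.
From mathcomp Require Import all_classical all_reals all_analysis.
From mathcomp Require Import ring lra.
Import Order.TTheory GRing.Theory Num.Theory.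
Local Open Scope ring_scope.
Local Open Scope classical_set_scope.

Theorem theorem7 (R : realType) (dm : measure_display) (Omega : measurableType dm)
  (P : probability Omega R) (N d T : nat)
  (x : nat -> Omega -> 'I_N -> 'rV[R]_d) (theta : 'rV[R]_d)
  (a a_star : nat -> Omega -> 'I_N)
  (U : nat -> Omega -> 'M[R]_N) (f : 'M[R]_N -> R) (delta C eps : R) :
  (forall t w i, l2norm (x t w i) <= 1) ->
  l2norm theta <= 1 ->
  (forall t w i, lin_reward (x t w i) theta <= lin_reward (x t w (a_star t w)) theta) ->
  measurable (reaches_target T U f delta) ->
  P (reaches_target T U f delta) = (1 - eps)%:E ->
  0 < C ->
  (forall eta1, 0 < eta1 < 1 ->
     let G := [set w | bandit_regret T x theta a a_star w <= regret_bound C N d T eta1] in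
     [/\ measurable G,
         (P G >= (1 - eta1)%:E)%E
       & P (reaches_target T U f delta `&` G) =
           (P (reaches_target T U f delta) * P G)%E]) ->
  forall eta, eps < eta < 1 ->
    (P (reaches_target T U f delta `&`
        [set w | (bandit_regret T x theta a a_star w <=
                 C * Num.sqrt (T%:R * d%:R *
                   (ln (N%:R * T%:R * ln T%:R * (1 - eps) / (eta - eps))) ^+ 3))%R])
     >= (1 - eta)%:E)%E.
Proof.
move=> _ _ _ _ HE _ H eta /andP[lt_eps lt_eta].
have hb : 0 < 1 - eps by rewrite subr_gt0 (lt_trans lt_eps lt_eta).
have ha : 0 < eta - eps by rewrite subr_gt0.
set eta1 := (eta - eps) / (1 - eps).
have h1 : 0 < eta1 < 1.
  apply/andP; split; first by rewrite divr_gt0.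
  by rewrite ltr_pdivrMr // mul1r ltrD2r.
have [_ HG Hind] := H eta1 h1.
have -> : N%:R * T%:R * ln T%:R * (1 - eps) / (eta - eps) =
          N%:R * T%:R * ln T%:R / eta1.
  rewrite /eta1; field.
  by apply/andP; split; rewrite lt0r_neq0.
rewrite Hind HE.
apply: le_trans; last by apply: lee_wpmul2l; [rewrite lee_fin ltW|exact: HG].
rewrite -EFinM lee_fin /eta1.
have -> : (1 - eps) * (1 - (eta - eps) / (1 - eps)) = 1 - eta.
  by field; rewrite lt0r_neq0.
by [].
Qed.
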